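(* Let $\alpha\ge0$ and $\mu\ge0$ be fixed. For every uniformly continuous bounded function $g$ on $[0,\infty)$ and every compact set $A\subset[0,\infty)$, $T_n(g;x)\to g(x)$ uniformly in $x\in A$ as $n\to\infty$.
   Context: For $\mu>-\tfrac12$ define $\gamma_\mu(2k)=\dfrac{2^{2k}k!\,\Gamma(k+\mu+1/2)}{\Gamma(\mu+1/2)}$ and $\gamma_\mu(2k+1)=\dfrac{2^{2k+1}k!\,\Gamma(k+\mu+3/2)}{\Gamma(\mu+1/2)}$, $k\ge0$; $e_\mu(x)=\sum_{k\ge0} x^k/\gamma_\mu(k)$; $\theta_k=0$ if $k$ is even and $\theta_k=1$ if $k$ is odd. Let $h_k^\mu(\xi,\alpha)=\gamma_\mu(k)\sum_{j=0}^{\lfloor k/2\rfloor}\dfrac{\alpha^j\xi^{k-2j}}{j!\,\gamma_\mu(k-2j)}$. For $\alpha\ge0,\mu\ge0$, $n\in\mathbb{N}$ and $x\in[0,\infty)$ define $$T_n(f;x)=\frac{1}{e^{\alpha x^2}e_\mu(nx)}\sum_{k=0}^\infty \frac{h_k^\mu(n,\alpha)}{\gamma_\mu(k)}x^k f\!\left(\frac{k+2\mu\theta_k}{n}\right).$$ *)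

(* Defs.v *)
From Stdlib Require Import Reals Lra Lia.
From Coquelicot Require Import Coquelicot.
Open Scope R_scope.

Fixpoint poch (a : R) (m : nat) : R :=
  match m with
  | O => 1
  | S m' => poch a m' * (a + INR m')
  end.

(* Gamma(k + mu + 1/2) / Gamma(mu + 1/2), written as a rising factorial
   (no Gamma function is available in the libraries). *)
Definition gamma_ratio (mu : R) (k : nat) : R := poch (mu + /2) k.

Definition gamma_mu (mu : R) (k : nat) : R :=
  let m := Nat.div2 k in
  if Nat.even k
  then 2 ^ (2 * m) * INR (Factorial.fact m) * gamma_ratio mu m
  else 2 ^ (2 * m + 1) * INR (Factorial.fact m) * gamma_ratio mu (S m).

Definition e_mu (mu x : R) : R := Series (fun k => x ^ k / gamma_mu mu k).

Definition theta (k : nat) : R := if Nat.even k then 0 else 1.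

Definition h_mu (mu : R) (k : nat) (xi alpha : R) : R :=
  gamma_mu mu k *
  sum_f_R0 (fun j => alpha ^ j * xi ^ (k - 2 * j) / (INR (Factorial.fact j) * gamma_mu mu (k - 2 * j)))
           (Nat.div2 k).

Definition T_op (alpha mu : R) (n : nat) (f : R -> R) (x : R) : R :=
  / (exp (alpha * x ^ 2) * e_mu mu (INR n * x)) *
  Series (fun k => h_mu mu k (INR n) alpha / gamma_mu mu k * x ^ k
                   * f ((INR k + 2 * mu * theta k) / INR n)).

Definition unif_cont_nonneg (g : R -> R) : Prop :=
  forall eps : R, 0 < eps -> exists delta : R, 0 < delta /\
    forall x y : R, 0 <= x -> 0 <= y -> Rabs (x - y) < delta -> Rabs (g x - g y) < eps.

Definition bounded_nonneg (g : R -> R) : Prop :=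
  exists M : R, forall x : R, 0 <= x -> Rabs (g x) <= M.

(* Main.v *)
Require Import Defs.
From Stdlib Require Import Reals Lra Lia.
From Coquelicot Require Import Coquelicot.
Open Scope R_scope.

Definition uu (mu : R) (m : nat) : R := INR m + 2 * mu * theta m.

Lemma parity (k : nat) : exists j, (k = 2 * j)%nat \/ (k = 2 * j + 1)%nat.
Proof.
  destruct (Nat.Even_or_Odd k) as [[j H]|[j H]]; exists j; lia.
Qed.

Lemma poch_pos a m : 0 < a -> 0 < poch a m.
Proof. intro Ha; induction m; simpl; [lra|]. apply Rmult_lt_0_compat; auto.
  pose proof (pos_INR m); lra. Qed.

Lemma gm_2j mu j : gamma_mu mu (2*j) = 2 ^ (2 * j) * INR (Factorial.fact j) * gamma_ratio mu j.
Proof. unfold gamma_mu. rewrite Nat.div2_double, Nat.even_even. reflexivity. Qed.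

Lemma gm_2j1 mu j : gamma_mu mu (2*j+1) = 2 ^ (2 * j + 1) * INR (Factorial.fact j) * gamma_ratio mu (S j).
Proof. unfold gamma_mu. rewrite Nat.div2_odd', Nat.even_odd. reflexivity. Qed.

Lemma theta_2j j : theta (2*j) = 0.
Proof. unfold theta. now rewrite Nat.even_even. Qed.
Lemma theta_2j1 j : theta (2*j+1) = 1.
Proof. unfold theta. now rewrite Nat.even_odd. Qed.

Lemma gm_pos mu k : 0 <= mu -> 0 < gamma_mu mu k.
Proof.
  intro hmu. destruct (parity k) as [j [->| ->]].
  - rewrite gm_2j. unfold gamma_ratio. apply Rmult_lt_0_compat; [apply Rmult_lt_0_compat|].
    apply pow_lt; lra. apply lt_0_INR, Factorial.lt_O_fact. apply poch_pos; lra.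
  - rewrite gm_2j1. unfold gamma_ratio. apply Rmult_lt_0_compat; [apply Rmult_lt_0_compat|].
    apply pow_lt; lra. apply lt_0_INR, Factorial.lt_O_fact. apply poch_pos; lra.
Qed.

Lemma gm0 mu : gamma_mu mu 0 = 1.
Proof. unfold gamma_mu. simpl. unfold gamma_ratio. simpl. lra. Qed.

Lemma gm_S mu m : gamma_mu mu (S m) = uu mu (S m) * gamma_mu mu m.
Proof.
  unfold uu. destruct (parity m) as [j [-> | ->]].
  - replace (S (2*j)) with (2*j+1)%nat by lia.
    rewrite gm_2j1, gm_2j, theta_2j1. unfold gamma_ratio. simpl poch.
    rewrite pow_add, plus_INR, mult_INR. simpl INR. field.
  - replace (S (2*j+1)) with (2*(S j))%nat by lia.
    rewrite gm_2j1, gm_2j, theta_2j. unfold gamma_ratio.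
    replace (2 * S j)%nat with (S (S (2*j))) by lia.
    replace (2*j+1)%nat with (S (2 * j)) by lia.
    replace (2 ^ S (S (2*j))) with (2*2*2^(2*j)) by (simpl; ring).
    replace (2 ^ S (2*j)) with (2*2^(2*j)) by (simpl; ring). replace (Factorial.fact (S j)) with (S j * Factorial.fact j)%nat by reflexivity.
    rewrite mult_INR, !S_INR, mult_INR. simpl INR. field.
Qed.

Lemma uu_nonneg mu m : 0 <= mu -> 0 <= uu mu m.
Proof. intro. unfold uu, theta. pose proof (pos_INR m). destruct (Nat.even m); nra. Qed.

Lemma uu_ge mu m : 0 <= mu -> INR m <= uu mu m.
Proof. intro. unfold uu, theta. destruct (Nat.even m); nra. Qed.

Lemma uu0 mu : uu mu 0 = 0.
Proof. unfold uu, theta. simpl. lra. Qed.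

Lemma uu_S mu m : 0 <= mu -> uu mu (S m) <= uu mu m + 1 + 2 * mu.
Proof.
  intro. unfold uu, theta. rewrite S_INR, Nat.even_succ, <- Nat.negb_even.
  destruct (Nat.even m); simpl; lra.
Qed.

Lemma gm_fact mu m : 0 <= mu -> INR (Factorial.fact m) <= gamma_mu mu m.
Proof.
  intro hmu. induction m.
  - rewrite gm0. simpl. lra.
  - rewrite gm_S. replace (Factorial.fact (S m)) with (S m * Factorial.fact m)%nat by reflexivity.
    rewrite mult_INR. apply Rmult_le_compat; auto using pos_INR, uu_ge.
Qed.

Lemma exp_series A : is_series (fun j => A ^ j / INR (Factorial.fact j)) (exp A).
Proof.
  apply is_series_Reals. unfold exp. destruct (exist_exp A) as [l Hl]. simpl.
  unfold exp_in in Hl. intros e He. destruct (Hl e He) as [N HN]. exists N.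
  intros n Hn. specialize (HN n Hn). erewrite sum_eq; [exact HN|].
  intros i _. unfold Rdiv. ring.
Qed.

Lemma ex_abs (a : nat -> R) : (forall n, 0 <= a n) -> ex_series a -> ex_series (fun n => Rabs (a n)).
Proof. intros H1 H2. eapply ex_series_ext; [|exact H2]. intro n. simpl. rewrite Rabs_pos_eq; auto. Qed.

Lemma Series_zero : Series (fun _ => 0) = 0.
Proof.
  transitivity (0 * Series (fun _ : nat => 0)); [|ring].
  rewrite <- Series_scal_l. apply Series_ext. intro; ring.
Qed.

Lemma Series_ge0 (a : nat -> R) : (forall n, 0 <= a n) -> ex_series a -> 0 <= Series a.
Proof.
  intros H He. rewrite <- Series_zero. apply Series_le; auto. intro; split; auto; lra.
Qed.

Lemma Series_ge_first (a : nat -> R) : (forall n, 0 <= a n) -> ex_series a -> a 0%nat <= Series a.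
Proof.
  intros H He. rewrite (Series_incr_1 a He).
  pose proof (Series_ge0 (fun k => a (S k)) (fun k => H (S k))).
  assert (ex_series (fun k => a (S k))) by (apply (ex_series_incr_1 a); exact He).
  specialize (H0 H1). lra.
Qed.

Definition bb (mu y : R) (m : nat) : R := y ^ m / gamma_mu mu m.

Lemma bb_nonneg mu y m : 0 <= mu -> 0 <= y -> 0 <= bb mu y m.
Proof. intros. unfold bb. apply Rdiv_le_0_compat. apply pow_le; auto. apply gm_pos; auto. Qed.

Lemma bb_ex mu y : 0 <= mu -> 0 <= y -> ex_series (bb mu y).
Proof.
  intros hmu hy. apply (@ex_series_le R_AbsRing R_CompleteNormedModule (bb mu y) (fun j => y ^ j / INR (Factorial.fact j))).
  - intro n. change norm with Rabs. simpl. rewrite Rabs_pos_eq by (apply bb_nonneg; auto).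
    unfold bb. apply Rmult_le_compat_l. apply pow_le; auto.
    apply Rinv_le_contravar. apply lt_0_INR, Factorial.lt_O_fact. apply gm_fact; auto.
  - eexists. apply exp_series.
Qed.

Lemma bb_is mu y : 0 <= mu -> 0 <= y -> is_series (bb mu y) (e_mu mu y).
Proof. intros. unfold e_mu. fold (bb mu y). apply Series_correct, bb_ex; auto. Qed.

Lemma e_mu_ge1 mu y : 0 <= mu -> 0 <= y -> 1 <= e_mu mu y.
Proof.
  intros. unfold e_mu. fold (bb mu y). 
  replace 1 with (bb mu y 0) by (unfold bb; rewrite gm0; simpl; field).
  apply Series_ge_first. intro; apply bb_nonneg; auto. apply bb_ex; auto.
Qed.

Lemma bb_shift mu y m : 0 <= mu -> bb mu y (S m) * uu mu (S m) = y * bb mu y m.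
Proof.
  intro. unfold bb. rewrite gm_S. pose proof (gm_pos mu m H).
  pose proof (uu_ge mu (S m) H). pose proof (lt_0_INR (S m) ltac:(lia)).
  simpl pow. field. split; lra.
Qed.

Lemma D1 mu y : 0 <= mu -> 0 <= y -> is_series (fun m => bb mu y m * uu mu m) (y * e_mu mu y).
Proof.
  intros hmu hy. apply is_series_decr_1.
  rewrite uu0. change (plus (y * e_mu mu y) (opp (bb mu y 0 * 0))) with (y * e_mu mu y - bb mu y 0 * 0).
  replace (y * e_mu mu y - bb mu y 0 * 0) with (y * e_mu mu y) by ring.
  apply (is_series_ext (fun n => y * bb mu y n)). intro n. symmetry. apply bb_shift. auto.
  exact (@is_series_scal_l R_AbsRing R_NormedModule y _ _ (bb_is mu y hmu hy)).
Qed.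

Lemma ex_R (a : nat -> R) (l : R) : is_series a l -> ex_series a.
Proof. intro H; exists l; exact H. Qed.

Lemma ex_le (a b : nat -> R) : (forall n, 0 <= a n <= b n) -> ex_series b -> ex_series a.
Proof.
  intros H Hb. apply (@ex_series_le R_AbsRing R_CompleteNormedModule a b); auto.
  intro n. change norm with Rabs. simpl. rewrite Rabs_pos_eq; apply H.
Qed.

Lemma D2 mu y : 0 <= mu -> 0 <= y ->
  ex_series (fun m => bb mu y m * (uu mu m - y) ^ 2) /\
  Series (fun m => bb mu y m * (uu mu m - y) ^ 2) <= (1 + 2 * mu) * y * e_mu mu y.
Proof.
  intros hmu hy. set (E := e_mu mu y).
  assert (H1 := D1 mu y hmu hy). assert (H0 := bb_is mu y hmu hy).
  set (c := fun k => y * (bb mu y k * uu mu k + (1 + 2 * mu) * bb mu y k)).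
  assert (Hc : is_series c (y * (y * E + (1 + 2 * mu) * E))).
  { unfold c. 
    apply (@is_series_scal_l R_AbsRing R_NormedModule y _ (y * E + (1 + 2 * mu) * E)).
    apply (@is_series_plus R_AbsRing R_NormedModule). exact H1.
    apply (@is_series_scal_l R_AbsRing R_NormedModule). exact H0. }
  assert (Hle : forall k, 0 <= bb mu y (S k) * uu mu (S k) ^ 2 <= c k).
  { intro k. split.
    - apply Rmult_le_pos. apply bb_nonneg; auto. apply pow2_ge_0.
    - replace (bb mu y (S k) * uu mu (S k) ^ 2) with (y * bb mu y k * uu mu (S k))
        by (rewrite <- bb_shift; auto; ring).
      unfold c. pose proof (uu_S mu k hmu). pose proof (bb_nonneg mu y k hmu hy).
      rewrite Rmult_assoc. apply Rmult_le_compat_l; auto. nra. }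
  assert (Hex2 : ex_series (fun m => bb mu y m * uu mu m ^ 2)).
  { apply (ex_series_incr_1 (fun m => bb mu y m * uu mu m ^ 2)).
    apply (ex_le _ c); auto. eapply ex_R; eauto. }
  assert (HS2 : Series (fun m => bb mu y m * uu mu m ^ 2) <= y * (y * E + (1 + 2 * mu) * E)).
  { rewrite Series_incr_1 by auto. rewrite uu0.
    rewrite <- (is_series_unique _ _ Hc). 
    replace (bb mu y 0 * 0 ^ 2) with 0 by (simpl; ring). rewrite Rplus_0_l.
    apply Series_le; auto. eapply ex_R; eauto. }
  assert (Hext : forall m, bb mu y m * (uu mu m - y) ^ 2 =
     bb mu y m * uu mu m ^ 2 - (2 * y) * (bb mu y m * uu mu m) + y ^ 2 * bb mu y m).
  { intro; ring. }
  assert (Hex1 : ex_series (fun m => bb mu y m * uu mu m)) by (eapply ex_R; eauto).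
  assert (Hex0 : ex_series (bb mu y)) by (eapply ex_R; eauto).
  assert (Hexa : ex_series (fun m => (2 * y) * (bb mu y m * uu mu m))).
  { eexists. apply (@is_series_scal_l R_AbsRing R_NormedModule). exact H1. }
  assert (Hexb : ex_series (fun m => y ^ 2 * bb mu y m)).
  { eexists. apply (@is_series_scal_l R_AbsRing R_NormedModule). exact H0. }
  assert (Hexc : ex_series (fun m => bb mu y m * uu mu m ^ 2 - (2 * y) * (bb mu y m * uu mu m))).
  { eexists. apply (@is_series_plus R_AbsRing R_NormedModule).
    apply Series_correct; auto.
    apply (@is_series_opp R_AbsRing R_NormedModule). apply Series_correct; auto. }
  split.
  - eapply ex_series_ext. intro m; symmetry; apply Hext.
    eexists. apply (@is_series_plus R_AbsRing R_NormedModule); apply Series_correct; auto.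
  - rewrite (Series_ext _ _ Hext). rewrite Series_plus by auto. rewrite Series_minus by auto.
    rewrite !Series_scal_l. rewrite (is_series_unique _ _ H1). 
    fold E. rewrite (is_series_unique _ _ H0). change (e_mu mu y) with E. nra.
Qed.

Definition ins (f : nat -> R) (i : nat) : R := if Nat.even i then f (Nat.div2 i) else 0.

Lemma even_div2 i : Nat.even i = true -> i = (2 * Nat.div2 i)%nat.
Proof. intro H. pose proof (Nat.div2_odd i). rewrite <- Nat.negb_even, H in H0. simpl in H0. lia. Qed.

Lemma sum_ins F K : sum_f_R0 (ins F) K = sum_f_R0 F (Nat.div2 K).
Proof.
  induction K.
  - simpl. unfold ins. simpl. reflexivity.
  - change (sum_f_R0 (ins F) (S K)) with (sum_f_R0 (ins F) K + ins F (S K)).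
    rewrite IHK. unfold ins. destruct (parity K) as [j [-> | ->]].
    + replace (S (2*j)) with (2*j+1)%nat by lia. rewrite Nat.even_odd, Nat.div2_odd', Nat.div2_double. ring.
    + replace (S (2*j+1)) with (2*(S j))%nat by lia. rewrite Nat.even_even, Nat.div2_odd', Nat.div2_double.
      reflexivity.
Qed.

Lemma div2_eventually : filterlim Nat.div2 eventually eventually.
Proof.
  intros P [N HN]. exists (2 * N)%nat. intros n Hn. apply HN.
  apply Nat.div2_le_lower_bound. lia.
Qed.

Lemma is_series_ins f l : is_series f l -> is_series (ins f) l.
Proof.
  intro H. unfold is_series in *.
  apply (filterlim_ext (fun K => sum_n f (Nat.div2 K))).
  - intro K. rewrite !sum_n_Reals. symmetry. apply sum_ins.
  - exact (filterlim_comp _ _ _ Nat.div2 (sum_n f) _ _ _ div2_eventually H).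
Qed.

Definition aa (alpha x : R) : nat -> R := ins (fun j => (alpha * x ^ 2) ^ j / INR (Factorial.fact j)).

Lemma aa_nonneg alpha x i : 0 <= alpha -> 0 <= aa alpha x i.
Proof.
  intro. unfold aa, ins. destruct (Nat.even i); [|lra].
  apply Rdiv_le_0_compat. apply pow_le. apply Rmult_le_pos; auto. apply pow2_ge_0.
  apply lt_0_INR, Factorial.lt_O_fact.
Qed.

Lemma aa_is alpha x : is_series (aa alpha x) (exp (alpha * x ^ 2)).
Proof. apply is_series_ins, exp_series. Qed.

Lemma cauchy_id alpha mu (n : nat) x k : 0 <= mu ->
  h_mu mu k (INR n) alpha / gamma_mu mu k * x ^ k =
  sum_f_R0 (fun i => aa alpha x i * bb mu (INR n * x) (k - i)) k.
Proof.
  intro hmu.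
  rewrite (sum_eq _ (ins (fun j => (alpha * x ^ 2) ^ j / INR (Factorial.fact j) * bb mu (INR n * x) (k - 2 * j)))).
  2:{ intros i Hi. unfold aa, ins. destruct (Nat.even i) eqn:E; [|ring].
      rewrite <- (even_div2 i E). reflexivity. }
  rewrite sum_ins. unfold h_mu.
  pose proof (gm_pos mu k hmu).
  replace (gamma_mu mu k * sum_f_R0 (fun j => alpha ^ j * INR n ^ (k - 2 * j) /
      (INR (Factorial.fact j) * gamma_mu mu (k - 2 * j))) (Nat.div2 k) / gamma_mu mu k * x ^ k)
    with (x ^ k * sum_f_R0 (fun j => alpha ^ j * INR n ^ (k - 2 * j) /
      (INR (Factorial.fact j) * gamma_mu mu (k - 2 * j))) (Nat.div2 k)) by (field; lra).
  rewrite scal_sum. apply sum_eq. intros j Hj.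
  assert (Hk : (2 * j <= k)%nat).
  { pose proof (Nat.div2_odd k). destruct (Nat.odd k); simpl in H0; lia. }
  unfold bb. pose proof (gm_pos mu (k - 2*j) hmu).
  pose proof (lt_0_INR _ (Factorial.lt_O_fact j)).
  replace (x ^ k) with ((x ^ 2) ^ j * x ^ (k - 2 * j)).
  2:{ rewrite <- pow_mult, <- pow_add. f_equal. lia. }
  rewrite !Rpow_mult_distr. field. lra.
Qed.

Lemma sq_le_pow j : INR j ^ 2 <= 2 * 2 ^ j.
Proof.
  destruct (Compare_dec.le_lt_dec 3 j) as [Hj|Hj].
  - replace j with (j - 3 + 3)%nat by lia. generalize (j - 3)%nat. clear. intro m.
    induction m.
    + simpl. lra.
    + replace (S m + 3)%nat with (S (m + 3)) by lia. rewrite S_INR. simpl pow. simpl pow in IHm.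
      pose proof (pos_INR (m + 3)). rewrite plus_INR in *. simpl INR in *.
      pose proof (pos_INR m). nra.
  - destruct j as [|[|[|]]]; simpl; try lra. lia.
Qed.

Lemma aG_bound alpha x : 0 <= alpha ->
  ex_series (fun i => aa alpha x i * INR i ^ 2) /\
  Series (fun i => aa alpha x i * INR i ^ 2) <= 8 * exp (2 * (alpha * x ^ 2)).
Proof.
  intro ha. set (A := alpha * x ^ 2).
  assert (HA : 0 <= A) by (unfold A; apply Rmult_le_pos; auto; apply pow2_ge_0).
  set (b := fun i => 8 * ins (fun j => (2 * A) ^ j / INR (Factorial.fact j)) i).
  assert (Hb : is_series b (8 * exp (2 * A))).
  { unfold b. apply (@is_series_scal_l R_AbsRing R_NormedModule).
    apply is_series_ins, exp_series. }
  assert (Hle : forall i, 0 <= aa alpha x i * INR i ^ 2 <= b i).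
  { intro i. split. apply Rmult_le_pos. apply aa_nonneg; auto. apply pow2_ge_0.
    unfold b, aa, ins. fold A. destruct (Nat.even i) eqn:E; [|lra].
    assert (Hi := even_div2 i E). set (j := Nat.div2 i) in *. clearbody j. subst i.
    pose proof (lt_0_INR _ (Factorial.lt_O_fact j)).
    rewrite mult_INR, Rpow_mult_distr. simpl INR.
    pose proof (sq_le_pow j). pose proof (pow_le A j HA).
    unfold Rdiv. rewrite Rpow_mult_distr.
    assert (0 < / INR (Factorial.fact j)) by (apply Rinv_0_lt_compat; lra).
    assert (A ^ j * / INR (Factorial.fact j) * (INR j ^ 2) <= A ^ j * / INR (Factorial.fact j) * (2 * 2 ^ j)).
    { apply Rmult_le_compat_l; auto. apply Rmult_le_pos; lra. }
    nra. }
  split.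
  - apply (ex_le _ b); auto. eapply ex_R; eauto.
  - rewrite <- (is_series_unique _ _ Hb). apply Series_le; auto. eapply ex_R; eauto.
Qed.

Lemma main_bound alpha mu (n : nat) x g M delta eps' :
  0 <= alpha -> 0 <= mu -> (1 <= n)%nat -> 0 <= x -> 0 < delta ->
  (forall t, 0 <= t -> Rabs (g t) <= M) ->
  (forall t, 0 <= t -> Rabs (t - x) < delta -> Rabs (g t - g x) < eps') ->
  Rabs (T_op alpha mu n g x - g x) <=
    eps' + 2 * M / delta ^ 2 * (2 * (1 + 2 * mu) * x / INR n + 16 * exp (alpha * x ^ 2) / INR n ^ 2).
Proof.
  intros ha hmu hn hx hd hM hU.
  assert (Hnn : 0 < INR n) by (apply lt_0_INR; lia).
  set (nn := INR n) in *.
  set (y := nn * x). assert (hy : 0 <= y) by (unfold y; nra).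
  set (E := e_mu mu y). assert (HE : 1 <= E) by (apply e_mu_ge1; auto).
  set (A := alpha * x ^ 2). set (eA := exp A). assert (HeA : 0 < eA) by apply exp_pos.
  set (a := aa alpha x). set (B := bb mu y).
  assert (Ha0 : forall i, 0 <= a i) by (intro; apply aa_nonneg; auto).
  assert (HB0 : forall i, 0 <= B i) by (intro; apply bb_nonneg; auto).
  assert (Hais : is_series a eA) by apply aa_is.
  assert (HBis : is_series B E) by (apply bb_is; auto).
  set (c := fun k => sum_f_R0 (fun i => a i * B (k - i)%nat) k).
  assert (Hc : is_series c (eA * E)).
  { apply is_series_mult; auto; apply ex_abs; auto; eapply ex_R; eauto. }
  assert (Hc0 : forall k, 0 <= c k).
  { intro k. apply cond_pos_sum. intro. apply Rmult_le_pos; auto. }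
  set (t := fun k : nat => (INR k + 2 * mu * theta k) / nn).
  assert (Ht0 : forall k, 0 <= t k).
  { intro k. unfold t. apply Rdiv_le_0_compat; auto. pose proof (pos_INR k).
    unfold theta. destruct (Nat.even k); nra. }
  set (F := fun m => (uu mu m / nn - x) ^ 2).
  destruct (D2 mu y hmu hy) as [HexD HD].
  fold B E in HexD, HD.
  assert (HBF : forall m, B m * F m = / nn ^ 2 * (B m * (uu mu m - y) ^ 2)).
  { intro m. unfold F, y. field. lra. }
  set (SF := Series (fun m => B m * F m)).
  assert (HexF : ex_series (fun m => B m * F m)).
  { eapply ex_series_ext. intro m; symmetry; apply HBF.
    destruct HexD as [l Hl]. eexists. apply (@is_series_scal_l R_AbsRing R_NormedModule). exact Hl. }
  assert (HSF : SF <= (1 + 2 * mu) * x * E / nn).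
  { unfold SF. rewrite (Series_ext _ _ HBF), Series_scal_l.
    apply (Rmult_le_compat_l (/ nn ^ 2)) in HD.
    2:{ left. apply Rinv_0_lt_compat. apply pow_lt. lra. }
    eapply Rle_trans; [exact HD|]. unfold y. right. field. lra. }
  assert (HSF0 : 0 <= SF).
  { apply Series_ge0; auto. intro m. apply Rmult_le_pos; auto. apply pow2_ge_0. }
  set (G := fun i : nat => 2 * INR i ^ 2 / nn ^ 2).
  destruct (aG_bound alpha x ha) as [HexG HGb]. fold a in HexG, HGb.
  set (SG := 2 / nn ^ 2 * Series (fun i => a i * INR i ^ 2)).
  assert (HaG : is_series (fun i => a i * G i) SG).
  { eapply is_series_ext. 2:{ apply (@is_series_scal_l R_AbsRing R_NormedModule (2 / nn ^ 2)).
      apply Series_correct. exact HexG. }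
    intro i. unfold G. change (scal (2 / nn ^ 2) (a i * INR i ^ 2)) with ((2 / nn ^ 2) * (a i * INR i ^ 2)).
    change (@eq R (2 / nn ^ 2 * (a i * INR i ^ 2)) (a i * (2 * INR i ^ 2 / nn ^ 2))). field. lra. }
  assert (HSG : SG <= 16 * eA * eA / nn ^ 2).
  { unfold SG. replace (16 * eA * eA) with (16 * exp (2 * A))
      by (unfold eA; rewrite Rmult_assoc, <- exp_plus; f_equal; f_equal; ring).
    apply (Rmult_le_compat_l (2 / nn ^ 2)) in HGb.
    2:{ apply Rdiv_le_0_compat. lra. apply pow_lt. lra. }
    eapply Rle_trans; [exact HGb|]. right. fold A. field. lra. }
  set (P := fun k => sum_f_R0 (fun i => a i * (2 * (B (k - i)%nat * F (k - i)%nat))) k).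
  set (Q := fun k => sum_f_R0 (fun i => (a i * G i) * B (k - i)%nat) k).
  assert (HP : is_series P (eA * (2 * SF))).
  { apply (is_series_mult a (fun m => 2 * (B m * F m))); auto.
    - apply (@is_series_scal_l R_AbsRing R_NormedModule 2). apply Series_correct; auto.
    - apply ex_abs; auto. eapply ex_R; eauto.
    - apply ex_abs. intro m. apply Rmult_le_pos. lra. apply Rmult_le_pos; auto. apply pow2_ge_0.
      eexists. apply (@is_series_scal_l R_AbsRing R_NormedModule 2). apply Series_correct; auto. }
  assert (HG0 : forall i, 0 <= a i * G i).
  { intro i. apply Rmult_le_pos; auto. unfold G. apply Rdiv_le_0_compat.
    pose proof (pow2_ge_0 (INR i)); lra. apply pow_lt; lra. }
  assert (HQ : is_series Q (SG * E)).
  { apply (is_series_mult (fun i => a i * G i) B); auto.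
    - apply ex_abs; auto. eapply ex_R; eauto.
    - apply ex_abs; auto. eapply ex_R; eauto. }
  assert (Hkey : forall k, 0 <= c k * (t k - x) ^ 2 <= P k + Q k).
  { intro k. split. apply Rmult_le_pos; auto. apply pow2_ge_0.
    unfold c, P, Q. rewrite Rmult_comm, scal_sum, <- sum_plus.
    apply sum_Rle. intros i Hi.
    unfold a, aa, ins. destruct (Nat.even i) eqn:Ei.
    2:{ rewrite !Rmult_0_l. lra. }
    fold (aa alpha x). set (ai := (alpha * x ^ 2) ^ Nat.div2 i / INR (Factorial.fact (Nat.div2 i))).
    assert (Hai : 0 <= ai).
    { pose proof (aa_nonneg alpha x i ha). unfold aa, ins in H. rewrite Ei in H. exact H. }
    assert (Htk : t k = (uu mu (k - i) + INR i) / nn).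
    { unfold t, uu. assert (theta k = theta (k - i)).
      { unfold theta. rewrite (even_div2 i Ei) in Hi |- *.
        replace k with (k - 2 * Nat.div2 i + 2 * Nat.div2 i)%nat at 1 by lia.
        rewrite Nat.even_add_mul_2. reflexivity. }
      rewrite H. replace (INR k) with (INR (k - i) + INR i). field. lra.
      rewrite <- plus_INR. f_equal. lia. }
    rewrite Htk. unfold F, G.
    set (u := uu mu (k - i)). set (I := INR i). pose proof (HB0 (k - i)%nat).
    set (b := B (k - i)%nat) in *.
    replace ((u + I) / nn - x) with ((u / nn - x) + I / nn) by (field; lra).
    replace (2 * I ^ 2 / nn ^ 2) with (2 * (I / nn) ^ 2) by (field; lra).
    set (w := u / nn - x). set (v := I / nn).
    assert (0 <= ai * b) by (apply Rmult_le_pos; auto).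
    assert ((w + v) ^ 2 <= 2 * w ^ 2 + 2 * v ^ 2) by (pose proof (pow2_ge_0 (w - v)); nra).
    nra. }
  assert (HexP : ex_series P) by (eapply ex_R; eauto).
  assert (HexQ : ex_series Q) by (eapply ex_R; eauto).
  assert (HexPQ : ex_series (fun k => P k + Q k)).
  { eexists. apply (@is_series_plus R_AbsRing R_NormedModule); eauto. }
  assert (HexV : ex_series (fun k => c k * (t k - x) ^ 2)) by (apply (ex_le _ _ Hkey HexPQ)).
  assert (HV : Series (fun k => c k * (t k - x) ^ 2) <= eA * (2 * SF) + SG * E).
  { apply (Rle_trans _ (Series (fun k => P k + Q k))). apply Series_le; auto. rewrite Series_plus; auto.
    rewrite (is_series_unique _ _ HP), (is_series_unique _ _ HQ). lra. }
  assert (HM0 : 0 <= M) by (pose proof (hM 0 (Rle_refl 0)); pose proof (Rabs_pos (g 0)); lra).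
  assert (He0 : 0 < eps').
  { assert (Rabs (x - x) < delta) by (rewrite Rminus_diag, Rabs_R0; auto).
    pose proof (hU x hx H). pose proof (Rabs_pos (g x - g x)). lra. }
  set (K := 2 * M / delta ^ 2).
  assert (HK0 : 0 <= K) by (unfold K; apply Rdiv_le_0_compat; [lra | apply pow_lt; lra]).
  set (d := fun k => g (t k) - g x).
  assert (Hd : forall k, Rabs (d k) <= eps' + K * (t k - x) ^ 2).
  { intro k. unfold d. destruct (Rlt_le_dec (Rabs (t k - x)) delta) as [Hl|Hl].
    - pose proof (hU (t k) (Ht0 k) Hl). pose proof (pow2_ge_0 (t k - x)).
      assert (0 <= K * (t k - x) ^ 2) by (apply Rmult_le_pos; auto). lra.
    - assert (delta ^ 2 <= (t k - x) ^ 2).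
      { rewrite <- (pow2_abs (t k - x)). apply pow_incr. lra. }
      assert (2 * M <= K * (t k - x) ^ 2).
      { unfold K. apply (Rle_trans _ (2 * M / delta ^ 2 * delta ^ 2)).
        right. field. lra. apply Rmult_le_compat_l; auto. }
      pose proof (Rabs_triang (g (t k)) (- g x)). rewrite Rabs_Ropp in H1.
      pose proof (hM (t k) (Ht0 k)). pose proof (hM x hx). unfold Rminus. lra. }
  assert (HexMc : ex_series (fun k => M * c k)).
  { eexists. apply (@is_series_scal_l R_AbsRing R_NormedModule M). exact Hc. }
  assert (Hexcg : ex_series (fun k => c k * g (t k))).
  { apply ex_series_Rabs. apply (ex_le _ (fun k => M * c k)); auto.
    intro k. split. apply Rabs_pos. rewrite Rabs_mult, Rabs_pos_eq by auto. rewrite (Rmult_comm M).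
    apply Rmult_le_compat_l; auto. }
  assert (Hexc : ex_series c) by (eapply ex_R; eauto).
  assert (Hexgc : ex_series (fun k => g x * c k)).
  { eexists. apply (@is_series_scal_l R_AbsRing R_NormedModule). exact Hc. }
  assert (Hexcd : ex_series (fun k => c k * d k)).
  { eapply ex_series_ext. 2:{ eexists. apply (@is_series_plus R_AbsRing R_NormedModule).
      apply Series_correct, Hexcg. apply (@is_series_opp R_AbsRing R_NormedModule). apply Series_correct, Hexgc. }
    intro k. unfold d. change (@eq R (c k * g (t k) + - (g x * c k)) (c k * (g (t k) - g x))). ring. }
  assert (HexR : ex_series (fun k => eps' * c k + K * (c k * (t k - x) ^ 2))).
  { eexists. apply (@is_series_plus R_AbsRing R_NormedModule).
    apply (@is_series_scal_l R_AbsRing R_NormedModule). exact Hc.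
    apply (@is_series_scal_l R_AbsRing R_NormedModule). apply Series_correct. exact HexV. }
  assert (Hacd : forall k, 0 <= Rabs (c k * d k) <= eps' * c k + K * (c k * (t k - x) ^ 2)).
  { intro k. split. apply Rabs_pos. rewrite Rabs_mult, Rabs_pos_eq by auto.
    replace (eps' * c k + K * (c k * (t k - x) ^ 2)) with (c k * (eps' + K * (t k - x) ^ 2)) by ring.
    apply Rmult_le_compat_l; auto. }
  assert (HexAcd : ex_series (fun k => Rabs (c k * d k))) by (apply (ex_le _ _ Hacd HexR)).
  assert (HSd : Rabs (Series (fun k => c k * d k)) <= eps' * (eA * E) + K * (eA * (2 * SF) + SG * E)).
  { eapply Rle_trans. apply Series_Rabs; auto.
    apply (Rle_trans _ (Series (fun k => eps' * c k + K * (c k * (t k - x) ^ 2)))). apply Series_le; auto.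
    rewrite Series_plus. rewrite !Series_scal_l. rewrite (is_series_unique _ _ Hc).
    apply Rplus_le_compat_l. apply Rmult_le_compat_l; auto.
    eexists. apply (@is_series_scal_l R_AbsRing R_NormedModule). exact Hc.
    eexists. apply (@is_series_scal_l R_AbsRing R_NormedModule). apply Series_correct. exact HexV. }
  assert (HT : T_op alpha mu n g x - g x = / (eA * E) * Series (fun k => c k * d k)).
  { unfold T_op. fold nn y E. fold A eA.
    rewrite (Series_ext _ (fun k => c k * g (t k))).
    2:{ intro k. pose proof (cauchy_id alpha mu n x k hmu) as Hci. fold nn in Hci. rewrite Hci. reflexivity. }
    unfold d. rewrite (Series_ext (fun k => c k * (g (t k) - g x)) (fun k => c k * g (t k) - g x * c k))
      by (intro; ring).
    rewrite Series_minus by auto. rewrite Series_scal_l, (is_series_unique _ _ Hc).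
    field. lra. }
  rewrite HT, Rabs_mult, Rabs_pos_eq.
  2:{ left. apply Rinv_0_lt_compat. nra. }
  assert (X1 : 2 * eA * SF <= eA * E * (2 * (1 + 2 * mu) * x / nn)).
  { apply (Rle_trans _ (2 * eA * ((1 + 2 * mu) * x * E / nn))).
    apply Rmult_le_compat_l; lra. right. field. lra. }
  assert (X2 : SG * E <= eA * E * (16 * eA / nn ^ 2)).
  { apply (Rle_trans _ (16 * eA * eA / nn ^ 2 * E)). apply Rmult_le_compat_r; lra.
    right. field. lra. }
  apply (Rle_trans _ (/ (eA * E) * (eps' * (eA * E) + K * (eA * E * (2 * (1 + 2 * mu) * x / nn + 16 * eA / nn ^ 2))))).
  - apply Rmult_le_compat_l. left. apply Rinv_0_lt_compat. nra.
    eapply Rle_trans. exact HSd. apply Rplus_le_compat_l. apply Rmult_le_compat_l; auto. lra.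
  - right. unfold K. field. repeat split; lra.
Qed.

Theorem theorem4 (alpha mu : R) (halpha : 0 <= alpha) (hmu : 0 <= mu)
  (g : R -> R) (hg_uc : unif_cont_nonneg g) (hg_b : bounded_nonneg g)
  (A : R -> Prop) (hA_sub : forall x, A x -> 0 <= x) (hA_cpt : compact A) :
  forall eps : R, 0 < eps -> exists N : nat, forall n : nat, (N <= n)%nat ->
    forall x : R, A x -> Rabs (T_op alpha mu n g x - g x) < eps.
Proof.
  intros eps Heps.
  destruct (hg_uc (eps / 2) ltac:(lra)) as [delta [Hd Hu]].
  destruct hg_b as [M HM].
  destruct (compact_P1 A hA_cpt) as [m [b Hb]].
  set (b' := Rabs b).
  set (K := 2 * M / delta ^ 2).
  assert (HM0 : 0 <= M) by (pose proof (HM 0 (Rle_refl 0)); pose proof (Rabs_pos (g 0)); lra).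
  assert (HK0 : 0 <= K) by (unfold K; apply Rdiv_le_0_compat; [lra | apply pow_lt; lra]).
  set (C := K * (2 * (1 + 2 * mu) * b' + 16 * exp (alpha * b' ^ 2))).
  assert (HC0 : 0 <= C).
  { unfold C. apply Rmult_le_pos; auto. assert (0 <= b') by apply Rabs_pos.
    pose proof (exp_pos (alpha * b' ^ 2)). apply Rplus_le_le_0_compat; [|lra].
    apply Rmult_le_pos; lra. }
  destruct (archimed_cor1 (eps / (2 * (C + 1)))) as [N [HN HN0]].
  { apply Rdiv_lt_0_compat; lra. }
  exists N. intros n Hn x Hx.
  assert (hx : 0 <= x) by auto.
  assert (Hxb : x <= b') by (pose proof (Hb x Hx); unfold b'; pose proof (Rle_abs b); lra).
  assert (HnN : INR N <= INR n) by (apply le_INR; lia).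
  assert (HN' : 0 < INR N) by (apply lt_0_INR; lia).
  assert (Hn1 : 1 <= INR n) by (replace 1 with (INR 1) by reflexivity; apply le_INR; lia).
  pose proof (main_bound alpha mu n x g M delta (eps / 2) halpha hmu ltac:(lia) hx Hd HM
    (fun t ht hl => Hu t x ht hx hl)) as Hmb.
  fold K in Hmb.
  assert (He : exp (alpha * x ^ 2) <= exp (alpha * b' ^ 2)).
  { assert (alpha * x ^ 2 <= alpha * b' ^ 2).
    { apply Rmult_le_compat_l; auto. apply pow_incr; lra. }
    destruct (Req_dec (alpha * x ^ 2) (alpha * b' ^ 2)) as [-> | Hne]; [lra|].
    left. apply exp_increasing. lra. }
  assert (Hbd : 2 * (1 + 2 * mu) * x / INR n + 16 * exp (alpha * x ^ 2) / INR n ^ 2 <= C / K * / INR n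
     \/ K = 0).
  { destruct (Req_dec K 0) as [H0|H0]; [right; auto|left].
    unfold C. replace (K * (2 * (1 + 2 * mu) * b' + 16 * exp (alpha * b' ^ 2)) / K)
      with (2 * (1 + 2 * mu) * b' + 16 * exp (alpha * b' ^ 2)) by (field; auto).
    pose proof (exp_pos (alpha * x ^ 2)).
    assert (16 * exp (alpha * x ^ 2) / INR n ^ 2 <= 16 * exp (alpha * b' ^ 2) / INR n).
    { unfold Rdiv. rewrite Rmult_assoc, Rmult_assoc. apply Rmult_le_compat; try lra.
      apply Rmult_le_pos. lra. left; apply Rinv_0_lt_compat; apply pow_lt; lra.
      apply Rmult_le_compat; try lra. left; apply Rinv_0_lt_compat; apply pow_lt; lra.
      apply Rinv_le_contravar. lra. simpl. nra. }
    assert (2 * (1 + 2 * mu) * x / INR n <= 2 * (1 + 2 * mu) * b' / INR n).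
    { unfold Rdiv. apply Rmult_le_compat_r. left; apply Rinv_0_lt_compat; lra.
      apply Rmult_le_compat_l; lra. }
    unfold Rdiv in *. lra. }
  assert (HCn : C * / INR n < eps / 2).
  { assert (/ INR n <= / INR N) by (apply Rinv_le_contravar; lra).
    assert (C * / INR n <= C * (eps / (2 * (C + 1)))).
    { apply Rmult_le_compat_l; auto. lra. }
    assert (C * (eps / (2 * (C + 1))) < eps / 2).
    { apply (Rmult_lt_reg_r (2 * (C + 1))). lra.
      replace (C * (eps / (2 * (C + 1))) * (2 * (C + 1))) with (C * eps) by (field; lra). nra. }
    lra. }
  destruct Hbd as [Hbd | HK].
  - eapply Rle_lt_trans. exact Hmb.
    assert (K * (2 * (1 + 2 * mu) * x / INR n + 16 * exp (alpha * x ^ 2) / INR n ^ 2) <= C * / INR n).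
    { destruct (Req_dec K 0) as [H0|H0].
      - rewrite H0, Rmult_0_l. pose proof (Rinv_0_lt_compat (INR n)). nra.
      - replace (C * / INR n) with (K * (C / K * / INR n)) by (field; lra).
        apply Rmult_le_compat_l; auto. }
    lra.
  - eapply Rle_lt_trans. exact Hmb. rewrite HK, Rmult_0_l. lra.
Qed.
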